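(* Let $\mathcal A$ be an associative unital algebra and $a_0,\dots,a_n\in\mathcal A$ invertible ($n\ge1$). Then in the cyclic quotient of noncommutative differential forms, $$\{a_1,\dots,a_n\}+\sum_{i=0}^{n-1}(-1)^{i+1}\{a_0,\dots,a_{i-1},a_ia_{i+1},a_{i+2},\dots,a_n\}+(-1)^{n+1}\{a_0,\dots,a_{n-1}\}=0.$$ For example $\{a\}-\{ab\}+\{b\}=0$ and $\{b,c\}-\{ab,c\}+\{a,bc\}-\{a,b\}=0$.
   Context: Let $\Omega^\bullet\mathcal A$ be the noncommutative de Rham algebra of $\mathcal A$: the graded algebra generated by $\mathcal A$ in degree $0$ and symbols $da$ in degree $1$, with $d(ab)=da\,b+a\,db$, $d1=0$, extended to a differential $d$ with $d^2=0$ and the graded Leibniz rule. Its cyclic quotient is $\Omega^\bullet\mathcal A/[\Omega^\bullet\mathcal A,\Omega^\bullet\mathcal A]$ (graded commutators), so that $\omega_1\omega_2=(-1)^{|\omega_1||\omega_2|}\omega_2\omega_1$ there. For invertible $a_1,\dots,a_n$, $\{a_1,\dots,a_n\}$ denotes the class of $da_1\,da_2\cdots da_n\,a_n^{-1}\cdots a_1^{-1}$ (the noncommutative analogue of $d\log a_1\wedge\dots\wedge d\log a_n$). *)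

(* Defs.v *)
From mathcomp Require Import all_boot all_order all_algebra.
Set Implicit Arguments. Unset Strict Implicit. Unset Printing Implicit Defensive.
Import GRing.Theory.
Local Open Scope ring_scope.

Definition alg_morph (k : comNzRingType) (A B : algType k) (f : A -> B) : Prop :=
  [/\ forall x y, f (x + y) = f x + f y,
      forall (c : k) x, f (c *: x) = c *: f x,
      f 1 = 1 &
      forall x y, f (x * y) = f x * f y].

(* A (nonnegatively) graded differential k-algebra structure on Om:
   hom n x  means  x is homogeneous of degree n (x in Om^n);
   Om is the direct sum of the Om^n; dd is the differential of degree +1,
   dd^2 = 0, graded Leibniz rule. *)
Record dga (k : comNzRingType) (Om : algType k) := DGA {
  hom : nat -> Om -> Prop;
  dd : Om -> Om;
  hom0 : forall n, hom n 0;
  homD : forall n x y, hom n x -> hom n y -> hom n (x + y);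
  homZ : forall n (c : k) x, hom n x -> hom n (c *: x);
  homM : forall m n x y, hom m x -> hom n y -> hom (m + n) (x * y);
  hom1 : hom 0 1;
  hom_span : forall x, exists N (f : nat -> Om),
      (forall i, hom i (f i)) /\ x = \sum_(i < N) f i;
  hom_indep : forall N (f : nat -> Om), (forall i, hom i (f i)) ->
      \sum_(i < N) f i = 0 -> forall i, (i < N)%N -> f i = 0;
  ddD : forall x y, dd (x + y) = dd x + dd y;
  ddZ : forall (c : k) x, dd (c *: x) = c *: dd x;
  dd_hom : forall n x, hom n x -> hom n.+1 (dd x);
  dd2 : forall x, dd (dd x) = 0;
  ddM : forall m x y, hom m x -> dd (x * y) = dd x * y + (-1) ^+ m * (x * dd y)
}.

Definition dga_morph (k : comNzRingType) (Om Om' : algType k)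
  (D : dga Om) (D' : dga Om') (phi : Om -> Om') : Prop :=
  [/\ alg_morph phi,
      forall x, phi (dd D x) = dd D' (phi x) &
      forall n x, hom D n x -> hom D' n (phi x)].

(* (D, iota) is the noncommutative de Rham algebra Omega^* A of A:
   iota : A -> Om^0 is a unital algebra morphism, and (D, iota) is universal
   among DG algebras receiving a unital algebra morphism from A into degree 0
   (this universal property characterises Omega^* A, generated by A in degree 0
   and the symbols da in degree 1 with d(ab) = da b + a db, d1 = 0). *)
Definition nc_deRham (k : comNzRingType) (A Om : algType k)
  (D : dga Om) (iota : A -> Om) : Prop :=
  [/\ alg_morph iota,
      forall a, hom D 0 (iota a) &
      forall (Om' : algType k) (D' : dga Om') (j : A -> Om'),
        alg_morph j -> (forall a, hom D' 0 (j a)) ->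
        exists phi : Om -> Om',
          [/\ dga_morph D D' phi,
              forall a, phi (iota a) = j a &
              forall psi, dga_morph D D' psi -> (forall a, psi (iota a) = j a) ->
                forall x, psi x = phi x]].

(* The k-submodule [Om, Om] spanned by graded commutators of homogeneous
   elements. An element is zero in the cyclic quotient Om/[Om,Om] iff it lies in it. *)
Inductive comm_span (k : comNzRingType) (Om : algType k) (D : dga Om) : Om -> Prop :=
  | cs_zero : comm_span D 0
  | cs_comm m n x y : hom D m x -> hom D n y ->
      comm_span D (x * y - (-1) ^+ (m * n) * (y * x))
  | cs_add x y : comm_span D x -> comm_span D y -> comm_span D (x + y)
  | cs_scale (c : k) x : comm_span D x -> comm_span D (c *: x).

(* The symbol {a_1,...,a_n}: given the list of pairs (a_i, a_i^{-1}),
   the form  d a_1 d a_2 ... d a_n a_n^{-1} ... a_1^{-1}  (to be read in the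
   cyclic quotient). *)
Definition sym (k : comNzRingType) (A Om : algType k) (D : dga Om)
  (iota : A -> Om) (s : seq (A * A)) : Om :=
  (\prod_(p <- s) dd D (iota p.1)) * \prod_(p <- rev s) iota p.2.

Definition pairs (A : Type) (a b : nat -> A) (n : nat) : seq (A * A) :=
  [seq (a i, b i) | i <- iota 0 n.+1].

Definition merge_at (k : comNzRingType) (A : algType k) (a b : nat -> A) (n i : nat)
  : seq (A * A) :=
  take i (pairs a b n) ++ (a i * a i.+1, b i.+1 * b i) :: drop i.+2 (pairs a b n).

(* Main.v *)
Require Import Defs.
From mathcomp Require Import all_boot all_order all_algebra.
From mathcomp Require Import zify.
Import GRing.Theory.
Local Open Scope ring_scope.

Lemma hom_prod (k : comNzRingType) (Om : algType k) (D : dga Om) (T : Type)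
  (F : T -> Om) (m : nat) (s : seq T) :
  (forall x, Defs.hom D m (F x)) -> Defs.hom D (m * size s) (\prod_(x <- s) F x).
Proof.
move=> hF; elim: s => [|x s IH]; first by rewrite big_nil muln0; exact: hom1.
by rewrite big_cons /= mulnS; apply: homM.
Qed.

Lemma telesc (R : pzRingType) (F : nat -> R) (m : nat) :
  \sum_(i < m) (-1) ^+ i.+1 * (F i.+1 + F i) = (-1) ^+ m * F m - F 0%N.
Proof.
elim: m => [|m IH]; first by rewrite big_ord0 expr0 mul1r subrr.
rewrite big_ord_recr /= IH exprS mulrDr !mulN1r.
idtac.
by rewrite !mulNr (addrC (- _)) addrAC addNKr.
Qed.

Lemma zmod_fact (V : zmodType) (z t r : V) : z + (t - r) + - t = - (r - z).
Proof. by rewrite opprB addrAC -addrA addKr. Qed.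

Theorem theorem4p7 (k : comNzRingType) (A Om : algType k) (D : dga Om)
  (iota : A -> Om) (n : nat) (a b : nat -> A) :
  nc_deRham D iota -> (0 < n)%N ->
  (forall i, (i <= n)%N -> a i * b i = 1 /\ b i * a i = 1) ->
  comm_span D
    (sym D iota (behead (pairs a b n))
     + \sum_(i < n) (-1) ^+ i.+1 * sym D iota (merge_at a b n i)
     + (-1) ^+ n.+1 * sym D iota (take n (pairs a b n))).
Proof.
case=> [[iD iZ i1 iM] ihom _] n0 hab.
pose f := fun i => (a i, b i).
pose dX := fun i => dd D (iota (a i)).
pose Y := fun i => iota (b i).
pose P := fun s : seq nat => \prod_(i <- s) dX i.
pose Yr := fun s : seq nat => \prod_(i <- rev s) Y i.
have hp : pairs a b n = map f (seq.iota 0 n.+1) by [].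
have symE : forall s, sym D iota (map f s) = P s * Yr s.
  by move=> s; rewrite /sym big_map -map_rev big_map.
pose R := fun j => P (seq.iota 0 j) * iota (a j) * P (seq.iota j.+1 (n - j))
   * Yr (seq.iota 0 n.+1).
have mergeE : forall i, (i < n)%N -> sym D iota (merge_at a b n i) = R i.+1 + R i.
  move=> i lt_in.
  have Hs : seq.iota 0 n.+1 = seq.iota 0 i ++ i :: i.+1 :: seq.iota i.+2 (n - i.+1).
    have -> : n.+1 = (i + (n - i.+1).+2)%N by lia.
    by rewrite iotaD add0n.
  rewrite /merge_at hp -map_take -map_drop take_iota drop_iota.
  have -> : minn i n.+1 = i by lia.
  have -> : (n.+1 - i.+2 = n - i.+1)%N by lia.
  rewrite add0n /R.
  have -> : seq.iota 0 i.+1 = seq.iota 0 i ++ [:: i] by rewrite -addn1 iotaD.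
  rewrite Hs.
  have -> : (n - i = (n - i.+1).+1)%N by lia.
  rewrite /sym big_cat big_cons /= !big_map rev_cat rev_cons -cats1 !big_cat /=.
  rewrite big_cons big_nil -!map_rev !big_map.
  rewrite /P /Yr /= !big_cat !big_cons !big_nil rev_cat !rev_cons -!cats1 !big_cat /=.
  rewrite !big_cons !big_nil !iM (@ddM _ _ D 0 _ _ (ihom _)) expr0 mul1r.
  by rewrite !mulr1 !mulrDl !mulrDr !mulrA !mulrDl.
rewrite (eq_bigr (fun i : 'I_n => (-1) ^+ i.+1 * (R i.+1 + R i))); last first.
  by move=> i _; rewrite mergeE.
rewrite telesc hp -map_take take_iota.
have -> : minn n n.+1 = n by lia.
have -> : behead [seq f i | i <- seq.iota 0 n.+1] = [seq f i | i <- seq.iota 1 n] by [].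
rewrite !symE /R subn0 subnn.
have E1 : Yr (seq.iota 0 n.+1) = Yr (seq.iota 1 n) * Y 0%N.
  by rewrite /Yr /= rev_cons -cats1 big_cat /= big_seq1.
have E2 : Yr (seq.iota 0 n.+1) = Y n * Yr (seq.iota 0 n).
  by rewrite /Yr -addn1 iotaD rev_cat /= big_cons.
have XY : forall i, (i <= n)%N -> iota (a i) * Y i = 1 /\ Y i * iota (a i) = 1.
  by move=> i /hab [h1 h2]; rewrite /Y -!iM h1 h2 i1.
pose W := P (seq.iota 1 n) * Yr (seq.iota 1 n) * Y 0%N.
have hW : Defs.hom D n W.
  rewrite -[n]addn0 -[(n + 0)%N]addn0; apply: homM; last exact: ihom.
  apply: homM.
    by move: (@hom_prod _ _ D _ dX 1 (seq.iota 1 n) (fun x => dd_hom (ihom _))); rewrite mul1n size_iota.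
  by move: (@hom_prod _ _ D _ Y 0 (rev (seq.iota 1 n)) (fun x => ihom _)); rewrite mul0n.
have -> : P (seq.iota 0 n) * iota (a n) * P (seq.iota n.+1 0) * Yr (seq.iota 0 n.+1)
   = P (seq.iota 0 n) * Yr (seq.iota 0 n).
  rewrite /= /P big_nil mulr1 E2. by rewrite -mulrA [iota _ * _]mulrA (proj1 (XY n (leqnn n))) mul1r.
have -> : P [::] * iota (a 0%N) * P (seq.iota 1 n) * Yr (seq.iota 0 n.+1)
   = iota (a 0%N) * W.
  by rewrite /P big_nil mul1r E1 /W !mulrA.
rewrite exprS mulN1r mulNr zmod_fact.
have -> : P (seq.iota 1 n) * Yr (seq.iota 1 n) = W * iota (a 0%N).
  by rewrite /W -!mulrA (proj2 (XY 0%N (leq0n n))) mulr1.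
rewrite -scaleN1r -[W * _]mul1r -(expr0 (-1 : Om)) -(mul0n n).
apply: cs_scale; apply: cs_comm => //.
Qed.
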